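(* Let $\{\mathcal H,\Gamma_0,\Gamma_1\}$ be a unitary boundary triple for $A^*$ with Weyl function $M(\cdot)$. Then the mapping $\Gamma_0$ (from $\mathfrak H^2$ to $\mathcal H$) is closable if and only if for some (equivalently, for every) $\lambda\in\mathbb C\setminus\mathbb R$ the following holds: whenever $h_n\in\operatorname{dom}M(\lambda)$, $h_n\to h$ in $\mathcal H$ and $\operatorname{Im}(M(\lambda)h_n,h_n)\to0$ as $n\to\infty$, then $h=0$.
   Context: $A$ is a closed symmetric relation in $\mathfrak H$. A unitary boundary triple for $A^*$: a linear operator $\Gamma=\{\Gamma_0,\Gamma_1\}$ from $\mathfrak H^2$ to $\mathcal H^2$ with $\operatorname{dom}\Gamma\subset A^*$ dense in $A^*$ such that $\Gamma^{-1}=\Gamma^{[*]}$, where $\Gamma^{[*]}=\{\{\{k,k'\},\{g,g'\}\}:(f',g)-(f,g')=(h',k)-(h,k')\text{ for all }\{\{f,f'\},\{h,h'\}\}\in\Gamma\}$. Weyl function: $M(\lambda)\Gamma_0\hat f_\lambda=\Gamma_1\hat f_\lambda$ for $\hat f_\lambda=\{f_\lambda,\lambda f_\lambda\}\in\operatorname{dom}\Gamma$. Closable means that the closure of the graph of $\Gamma_0$ in $\mathfrak H^2\times\mathcal H$ is the graph of an operator. *)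

(* Defs.v *)
From Stdlib Require Import Reals.
Open Scope R_scope.

Record Cx := mkCx { Cre : R; Cim : R }.
Definition C0 : Cx := mkCx 0 0.
Definition C1 : Cx := mkCx 1 0.
Definition Cadd (a b : Cx) : Cx := mkCx (Cre a + Cre b) (Cim a + Cim b).
Definition Copp (a : Cx) : Cx := mkCx (- Cre a) (- Cim a).
Definition Csub (a b : Cx) : Cx := Cadd a (Copp b).
Definition Cmul (a b : Cx) : Cx :=
  mkCx (Cre a * Cre b - Cim a * Cim b) (Cre a * Cim b + Cim a * Cre b).
Definition Cconj (a : Cx) : Cx := mkCx (Cre a) (- Cim a).

(** Complex Hilbert spaces; the inner product is linear in the first
    argument and conjugate-linear in the second. *)
Record HilbertSpace := {
  hs_car :> Type;
  hs_zero : hs_car;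
  hs_add : hs_car -> hs_car -> hs_car;
  hs_opp : hs_car -> hs_car;
  hs_scal : Cx -> hs_car -> hs_car;
  hs_inner : hs_car -> hs_car -> Cx;
  hs_addA : forall x y z, hs_add x (hs_add y z) = hs_add (hs_add x y) z;
  hs_addC : forall x y, hs_add x y = hs_add y x;
  hs_add0 : forall x, hs_add hs_zero x = x;
  hs_addN : forall x, hs_add x (hs_opp x) = hs_zero;
  hs_scal1 : forall x, hs_scal C1 x = x;
  hs_scalA : forall a b x, hs_scal a (hs_scal b x) = hs_scal (Cmul a b) x;
  hs_scalDl : forall a b x, hs_scal (Cadd a b) x = hs_add (hs_scal a x) (hs_scal b x);
  hs_scalDr : forall a x y, hs_scal a (hs_add x y) = hs_add (hs_scal a x) (hs_scal a y);
  hs_innerDl : forall x y z, hs_inner (hs_add x y) z = Cadd (hs_inner x z) (hs_inner y z);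
  hs_innerZl : forall a x y, hs_inner (hs_scal a x) y = Cmul a (hs_inner x y);
  hs_innerC : forall x y, hs_inner y x = Cconj (hs_inner x y);
  hs_inner_ge0 : forall x, 0 <= Cre (hs_inner x x);
  hs_inner_eq0 : forall x, hs_inner x x = C0 -> x = hs_zero;
  hs_complete : forall u : nat -> hs_car,
    (forall eps, eps > 0 -> exists N, forall n m, (n >= N)%nat -> (m >= N)%nat ->
        sqrt (Cre (hs_inner (hs_add (u n) (hs_opp (u m))) (hs_add (u n) (hs_opp (u m))))) < eps) ->
    exists l, forall eps, eps > 0 -> exists N, forall n, (n >= N)%nat ->
        sqrt (Cre (hs_inner (hs_add (u n) (hs_opp l)) (hs_add (u n) (hs_opp l)))) < eps
}.

Arguments hs_zero {_}.
Arguments hs_add {_}.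
Arguments hs_opp {_}.
Arguments hs_scal {_}.
Arguments hs_inner {_}.

Section Ops.
Variable H : HilbertSpace.
Definition hsub (x y : H) : H := hs_add x (hs_opp y).
Definition hnorm (x : H) : R := sqrt (Cre (hs_inner x x)).
Definition hdist (x y : H) : R := hnorm (hsub x y).
Definition hconv (u : nat -> H) (l : H) : Prop :=
  forall eps, eps > 0 -> exists N, forall n, (n >= N)%nat -> hdist (u n) l < eps.
End Ops.
Arguments hsub {_}.
Arguments hnorm {_}.
Arguments hdist {_}.
Arguments hconv {_}.

Definition lrel (H : HilbertSpace) := H -> H -> Prop.

Definition lrel_linear {H : HilbertSpace} (A : lrel H) : Prop :=
  A hs_zero hs_zero /\
  (forall f f' g g', A f f' -> A g g' -> A (hs_add f g) (hs_add f' g')) /\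
  (forall (a : Cx) f f', A f f' -> A (hs_scal a f) (hs_scal a f')).

Definition lrel_closed {H : HilbertSpace} (A : lrel H) : Prop :=
  forall (u v : nat -> H) f f', (forall n, A (u n) (v n)) ->
    hconv u f -> hconv v f' -> A f f'.

Definition lrel_adj {H : HilbertSpace} (A : lrel H) : lrel H :=
  fun k k' => forall f f', A f f' -> hs_inner f' k = hs_inner f k'.

Definition closed_symmetric_relation {H : HilbertSpace} (A : lrel H) : Prop :=
  lrel_linear A /\ lrel_closed A /\ (forall f f', A f f' -> lrel_adj A f f').

(** ** Boundary mappings: Gamma is a relation between H^2 and K^2,
    represented by its graph  Gamma {f,f'} {h,h'}. *)
Definition brel (H K : HilbertSpace) := (H * H)%type -> (K * K)%type -> Prop.

Definition brel_linear {H K : HilbertSpace} (G : brel H K) : Prop :=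
  G (hs_zero, hs_zero) (hs_zero, hs_zero) /\
  (forall x y x' y', G x y -> G x' y' ->
     G (hs_add (fst x) (fst x'), hs_add (snd x) (snd x'))
       (hs_add (fst y) (fst y'), hs_add (snd y) (snd y'))) /\
  (forall (a : Cx) x y, G x y ->
     G (hs_scal a (fst x), hs_scal a (snd x)) (hs_scal a (fst y), hs_scal a (snd y))).

Definition brel_operator {H K : HilbertSpace} (G : brel H K) : Prop :=
  forall x y1 y2, G x y1 -> G x y2 -> y1 = y2.

Definition brel_Kadj {H K : HilbertSpace} (G : brel H K) : brel K H :=
  fun kk gg => let (k, k') := kk in let (g, g') := gg in
    forall f f' h h', G (f, f') (h, h') ->
      Csub (hs_inner f' g) (hs_inner f g') = Csub (hs_inner h' k) (hs_inner h k').

Definition unitary_boundary_triple {H K : HilbertSpace} (A : lrel H) (G : brel H K) : Prop :=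
  brel_linear G /\ brel_operator G /\
  (forall f f' y, G (f, f') y -> lrel_adj A f f') /\
  (forall f f', lrel_adj A f f' -> forall eps, eps > 0 ->
     exists g g' y, G (g, g') y /\ hdist g f < eps /\ hdist g' f' < eps) /\
  (forall x y, G x y <-> brel_Kadj G y x).

Definition Gamma0_graph {H K : HilbertSpace} (G : brel H K) : (H * H)%type -> K -> Prop :=
  fun x h => exists h', G x (h, h').

Definition closure_HHK {H K : HilbertSpace} (S : (H * H)%type -> K -> Prop)
  : (H * H)%type -> K -> Prop :=
  fun x h => forall eps, eps > 0 -> exists x' h', S x' h' /\
    hdist (fst x') (fst x) < eps /\ hdist (snd x') (snd x) < eps /\ hdist h' h < eps.

Definition is_operator_graph {X Y : Type} (S : X -> Y -> Prop) : Prop :=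
  forall x y1 y2, S x y1 -> S x y2 -> y1 = y2.

Definition closable_Gamma0 {H K : HilbertSpace} (G : brel H K) : Prop :=
  is_operator_graph (closure_HHK (Gamma0_graph G)).

Definition Weyl {H K : HilbertSpace} (G : brel H K) (lam : Cx) : lrel K :=
  fun h k => exists f : H, G (f, hs_scal lam f) (h, k).

Definition weyl_condition {H K : HilbertSpace} (G : brel H K) (lam : Cx) : Prop :=
  forall (h k : nat -> K) (hl : K),
    (forall n, Weyl G lam (h n) (k n)) ->
    hconv h hl ->
    Un_cv (fun n => Cim (hs_inner (k n) (h n))) 0 ->
    hl = hs_zero.

(* Main.v *)
Require Import Defs.
From Stdlib Require Import Reals Lra Psatz Classical ClassicalEpsilon.
Open Scope R_scope.
Notation C1 := Defs.C1.
Notation C0 := Defs.C0.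
Arguments hs_addA {_}. Arguments hs_addC {_}. Arguments hs_add0 {_}. Arguments hs_addN {_}. Arguments hs_scal1 {_}. Arguments hs_scalA {_}. Arguments hs_scalDl {_}. Arguments hs_scalDr {_}. Arguments hs_innerDl {_}. Arguments hs_innerZl {_}. Arguments hs_innerC {_}. Arguments hs_inner_ge0 {_}. Arguments hs_inner_eq0 {_}. Arguments hs_complete {_}.

Lemma Cx_ext (a b : Cx) : Cre a = Cre b -> Cim a = Cim b -> a = b.
Proof. destruct a, b; simpl; intros; subst; reflexivity. Qed.

Ltac cxs := apply Cx_ext; unfold Cadd, Csub, Copp, Cmul, Cconj, Defs.C0, Defs.C1; simpl; ring.

Lemma addr0 {X : HilbertSpace} (x : X) : hs_add x hs_zero = x.
Proof. rewrite hs_addC; apply hs_add0. Qed.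
Lemma addNr {X : HilbertSpace} (x : X) : hs_add (hs_opp x) x = hs_zero.
Proof. rewrite hs_addC; apply hs_addN. Qed.
Lemma add_cancel_l {X : HilbertSpace} (a x y : X) : hs_add a x = hs_add a y -> x = y.
Proof.
  intro E. rewrite <- (hs_add0 x), <- (hs_add0 y), <- (addNr a), <- !hs_addA, E. reflexivity.
Qed.
Lemma opp_unique {X : HilbertSpace} (x y : X) : hs_add x y = hs_zero -> y = hs_opp x.
Proof. intro E. apply (add_cancel_l x). rewrite E, hs_addN. reflexivity. Qed.
Lemma oppK {X : HilbertSpace} (x : X) : hs_opp (hs_opp x) = x.
Proof. symmetry. apply opp_unique. apply addNr. Qed.
Lemma opp0 {X : HilbertSpace} : hs_opp (@hs_zero X) = hs_zero.
Proof. symmetry. apply opp_unique. apply addr0. Qed.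
Lemma addACA {X : HilbertSpace} (a b c d : X) :
  hs_add (hs_add a b) (hs_add c d) = hs_add (hs_add a c) (hs_add b d).
Proof.
  rewrite <- !hs_addA. f_equal. rewrite !hs_addA. f_equal. apply hs_addC.
Qed.
Lemma oppD {X : HilbertSpace} (x y : X) : hs_opp (hs_add x y) = hs_add (hs_opp x) (hs_opp y).
Proof. symmetry. apply opp_unique. rewrite addACA, !hs_addN. apply hs_add0. Qed.
Lemma scal0l {X : HilbertSpace} (x : X) : hs_scal C0 x = hs_zero.
Proof.
  apply (add_cancel_l (hs_scal C0 x)). rewrite addr0, <- hs_scalDl. f_equal. cxs.
Qed.
Lemma scal0r {X : HilbertSpace} (a : Cx) : hs_scal a (@hs_zero X) = hs_zero.
Proof.
  apply (add_cancel_l (hs_scal a hs_zero)). rewrite addr0, <- hs_scalDr, hs_add0. reflexivity.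
Qed.
Lemma scalN1 {X : HilbertSpace} (x : X) : hs_scal (Copp C1) x = hs_opp x.
Proof.
  apply opp_unique. rewrite <- (hs_scal1 x) at 1. rewrite <- hs_scalDl.
  replace (Cadd C1 (Copp C1)) with C0 by cxs. apply scal0l.
Qed.
Lemma scal_opp {X : HilbertSpace} a (x : X) : hs_scal a (hs_opp x) = hs_opp (hs_scal a x).
Proof. apply opp_unique. rewrite <- hs_scalDr, hs_addN. apply scal0r. Qed.
Lemma scal_sub {X : HilbertSpace} a (x y : X) :
  hs_scal a (hsub x y) = hsub (hs_scal a x) (hs_scal a y).
Proof. unfold hsub. rewrite hs_scalDr, scal_opp. reflexivity. Qed.
Lemma sub_addACA {X : HilbertSpace} (a b c d : X) :
  hsub (hs_add a b) (hs_add c d) = hs_add (hsub a c) (hsub b d).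
Proof. unfold hsub. rewrite oppD. apply addACA. Qed.
Lemma subrr {X : HilbertSpace} (x : X) : hsub x x = hs_zero.
Proof. apply hs_addN. Qed.
Lemma subr0 {X : HilbertSpace} (x : X) : hsub x hs_zero = x.
Proof. unfold hsub. rewrite opp0. apply addr0. Qed.
Lemma sub_eq0 {X : HilbertSpace} (x y : X) : hsub x y = hs_zero -> x = y.
Proof. intro E. rewrite <- (oppK y). apply opp_unique. rewrite hs_addC. exact E. Qed.
Lemma subK {X : HilbertSpace} (p q : X) : hs_add (hsub p q) q = p.
Proof. unfold hsub. rewrite <- hs_addA, addNr. apply addr0. Qed.
Lemma oppsub {X : HilbertSpace} (r s : X) : hs_opp (hsub r s) = hs_add (hs_opp r) s.
Proof. unfold hsub. rewrite oppD, oppK. reflexivity. Qed.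
Lemma sub_swap {X : HilbertSpace} (p q r s : X) :
  hsub (hsub p q) (hsub r s) = hsub (hsub p r) (hsub q s).
Proof.
  unfold hsub. rewrite !oppD, !oppK. apply addACA.
Qed.
Lemma sub_via {X : HilbertSpace} (a b c : X) : hsub a b = hsub (hsub a c) (hsub b c).
Proof.
  unfold hsub. rewrite oppD, oppK, addACA, addNr, addr0. reflexivity.
Qed.
Lemma opp_sub2 {X : HilbertSpace} (u v : X) : hsub (hs_opp u) (hs_opp v) = hs_opp (hsub u v).
Proof. unfold hsub. rewrite oppD. reflexivity. Qed.


Lemma inner_addr {X : HilbertSpace} (x y z : X) :
  hs_inner x (hs_add y z) = Cadd (hs_inner x y) (hs_inner x z).
Proof.
  rewrite hs_innerC, hs_innerDl, (hs_innerC y x), (hs_innerC z x).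
  destruct (hs_inner x y), (hs_inner x z). cxs.
Qed.
Lemma inner_scalr {X : HilbertSpace} a (x y : X) :
  hs_inner x (hs_scal a y) = Cmul (Cconj a) (hs_inner x y).
Proof.
  rewrite hs_innerC, hs_innerZl, (hs_innerC y x). destruct a, (hs_inner x y). cxs.
Qed.
Lemma inner0l {X : HilbertSpace} (y : X) : hs_inner hs_zero y = C0.
Proof. rewrite <- (scal0l y), hs_innerZl. cxs. Qed.
Lemma inner0r {X : HilbertSpace} (y : X) : hs_inner y hs_zero = C0.
Proof. rewrite hs_innerC, inner0l. cxs. Qed.
Lemma inner_oppl {X : HilbertSpace} (x y : X) : hs_inner (hs_opp x) y = Copp (hs_inner x y).
Proof. rewrite <- scalN1, hs_innerZl. cxs. Qed.
Lemma inner_oppr {X : HilbertSpace} (x y : X) : hs_inner y (hs_opp x) = Copp (hs_inner y x).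
Proof. rewrite <- scalN1, inner_scalr. cxs. Qed.
Lemma inner_subl {X : HilbertSpace} (x y z : X) :
  hs_inner (hsub x y) z = Csub (hs_inner x z) (hs_inner y z).
Proof. unfold hsub. rewrite hs_innerDl, inner_oppl. reflexivity. Qed.
Lemma inner_subr {X : HilbertSpace} (x y z : X) :
  hs_inner z (hsub x y) = Csub (hs_inner z x) (hs_inner z y).
Proof. unfold hsub. rewrite inner_addr, inner_oppr. reflexivity. Qed.
Lemma im_self {X : HilbertSpace} (x : X) : Cim (hs_inner x x) = 0.
Proof. pose proof (f_equal Cim (hs_innerC x x)). simpl in H. lra. Qed.
Lemma re_sym {X : HilbertSpace} (x y : X) : Cre (hs_inner y x) = Cre (hs_inner x y).
Proof. rewrite hs_innerC. reflexivity. Qed.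
Lemma im_sym {X : HilbertSpace} (x y : X) : Cim (hs_inner y x) = - Cim (hs_inner x y).
Proof. rewrite hs_innerC. reflexivity. Qed.

Definition ns {X : HilbertSpace} (x : X) : R := Cre (hs_inner x x).
Lemma ns_ge0 {X : HilbertSpace} (x : X) : 0 <= ns x.
Proof. apply hs_inner_ge0. Qed.
Lemma ns_eq0 {X : HilbertSpace} (x : X) : ns x = 0 -> x = hs_zero.
Proof. intro E. apply hs_inner_eq0. apply Cx_ext. exact E. rewrite im_self. reflexivity. Qed.
Lemma ns0 {X : HilbertSpace} : ns (@hs_zero X) = 0.
Proof. unfold ns. rewrite inner0l. reflexivity. Qed.
Lemma ns_add {X : HilbertSpace} (x y : X) :
  ns (hs_add x y) = ns x + ns y + 2 * Cre (hs_inner x y).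
Proof.
  unfold ns. rewrite hs_innerDl, !inner_addr. simpl. rewrite (re_sym x y). ring.
Qed.
Lemma ns_sub {X : HilbertSpace} (x y : X) :
  ns (hsub x y) = ns x + ns y - 2 * Cre (hs_inner x y).
Proof.
  unfold ns. rewrite inner_subl, !inner_subr. simpl. rewrite (re_sym x y). ring.
Qed.
Lemma ns_scal {X : HilbertSpace} a (x : X) :
  ns (hs_scal a x) = (Cre a * Cre a + Cim a * Cim a) * ns x.
Proof.
  unfold ns. rewrite hs_innerZl, inner_scalr. simpl. rewrite im_self. ring.
Qed.
Lemma ns_opp {X : HilbertSpace} (x : X) : ns (hs_opp x) = ns x.
Proof. unfold ns. rewrite inner_oppl, inner_oppr. simpl. ring. Qed.
Lemma ns_sub_le {X : HilbertSpace} (x y : X) : ns (hsub x y) <= 2 * ns x + 2 * ns y.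
Proof. pose proof (ns_add x y). pose proof (ns_sub x y). pose proof (ns_ge0 (hs_add x y)). lra. Qed.
Lemma ns_add_le {X : HilbertSpace} (x y : X) : ns (hs_add x y) <= 2 * ns x + 2 * ns y.
Proof. pose proof (ns_add x y). pose proof (ns_sub x y). pose proof (ns_ge0 (hsub x y)). lra. Qed.
Lemma ns_subC {X : HilbertSpace} (x y : X) : ns (hsub x y) = ns (hsub y x).
Proof. rewrite !ns_sub, (re_sym x y). ring. Qed.

Lemma CS_re {X : HilbertSpace} (x y : X) :
  Cre (hs_inner x y) * Cre (hs_inner x y) <= ns x * ns y.
Proof.
  set (r := Cre (hs_inner x y)).
  assert (Q : forall t, 0 <= ns x + 2 * t * r + t * t * ns y).
  { intro t. pose proof (ns_ge0 (hs_add x (hs_scal (mkCx t 0) y))).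
    rewrite ns_add, ns_scal, inner_scalr in H. simpl in H. fold r in H. nra. }
  pose proof (ns_ge0 x). pose proof (ns_ge0 y).
  destruct (Req_dec (ns y) 0) as [E|E].
  - destruct (Req_dec r 0) as [Er|Er]. rewrite Er, E. lra.
    specialize (Q (- (ns x + 1) / (2 * r))). rewrite E in Q.
    replace (2 * (- (ns x + 1) / (2 * r)) * r) with (- (ns x + 1)) in Q by (field; auto). nra.
  - specialize (Q (- r / ns y)).
    replace (ns x + 2 * (- r / ns y) * r + - r / ns y * (- r / ns y) * ns y)
      with (ns x - r * r / ns y) in Q by (field; auto).
    assert (0 < ns y) by lra.
    apply Rmult_le_reg_r with (/ ns y). apply Rinv_0_lt_compat; lra.
    replace (ns x * ns y * / ns y) with (ns x) by (field; lra).
    unfold Rdiv in Q. lra.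
Qed.
Lemma CS_im {X : HilbertSpace} (x y : X) :
  Cim (hs_inner x y) * Cim (hs_inner x y) <= ns x * ns y.
Proof.
  pose proof (CS_re x (hs_scal (mkCx 0 1) y)). rewrite inner_scalr, ns_scal in H.
  simpl in H. replace ((0 * Cre (hs_inner x y) - - (1) * Cim (hs_inner x y))) with (Cim (hs_inner x y)) in H by ring.
  lra.
Qed.


Definition cv {X : HilbertSpace} (u : nat -> X) (l : X) : Prop :=
  forall eps, eps > 0 -> exists N, forall n, (n >= N)%nat -> ns (hsub (u n) l) < eps.

Lemma sqrt_lt_sq (a e : R) : 0 <= a -> 0 < e -> (sqrt a < e <-> a < e * e).
Proof.
  intros Ha He. split; intro H.
  - pose proof (sqrt_sqrt a Ha). pose proof (sqrt_pos a). nra.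
  - rewrite <- (sqrt_square e) by lra. apply sqrt_lt_1_alt. lra.
Qed.

Lemma hconv_cv {X : HilbertSpace} (u : nat -> X) l : hconv u l <-> cv u l.
Proof.
  split; intros H eps Heps.
  - destruct (H (sqrt eps)) as [N HN]. apply sqrt_lt_R0; lra.
    exists N. intros n Hn. specialize (HN n Hn). unfold hdist, hnorm in HN.
    apply sqrt_lt_sq in HN; [|apply ns_ge0| apply sqrt_lt_R0; lra].
    rewrite sqrt_sqrt in HN by lra. exact HN.
  - destruct (H (eps * eps)) as [N HN]. nra.
    exists N. intros n Hn. unfold hdist, hnorm. apply sqrt_lt_sq. apply ns_ge0. lra. apply HN; auto.
Qed.

Lemma cv_const {X : HilbertSpace} (l : X) : cv (fun _ => l) l.
Proof. intros eps He. exists 0%nat. intros. rewrite subrr, ns0. lra. Qed.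

Lemma cv_add {X : HilbertSpace} (u v : nat -> X) l m :
  cv u l -> cv v m -> cv (fun n => hs_add (u n) (v n)) (hs_add l m).
Proof.
  intros Hu Hv eps He. destruct (Hu (eps/4)) as [N1 H1]. lra. destruct (Hv (eps/4)) as [N2 H2]. lra.
  exists (max N1 N2). intros n Hn. rewrite sub_addACA.
  eapply Rle_lt_trans. apply ns_add_le.
  assert (ns (hsub (u n) l) < eps/4) by (apply H1; lia).
  assert (ns (hsub (v n) m) < eps/4) by (apply H2; lia). lra.
Qed.

Lemma cv_scal {X : HilbertSpace} a (u : nat -> X) l :
  cv u l -> cv (fun n => hs_scal a (u n)) (hs_scal a l).
Proof.
  intros Hu eps He. set (c := Cre a * Cre a + Cim a * Cim a).
  assert (0 <= c) by (unfold c; nra).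
  destruct (Hu (eps / (c + 1))) as [N HN]. apply Rdiv_lt_0_compat; lra.
  exists N. intros n Hn. rewrite <- scal_sub, ns_scal. fold c.
  specialize (HN n Hn). pose proof (ns_ge0 (hsub (u n) l)).
  assert (c * ns (hsub (u n) l) <= (c+1) * ns (hsub (u n) l)) by nra.
  assert ((c+1) * ns (hsub (u n) l) < (c+1) * (eps / (c+1))) by (apply Rmult_lt_compat_l; lra).
  replace ((c+1) * (eps / (c+1))) with eps in H2 by (field; lra). lra.
Qed.

Lemma cv_sub {X : HilbertSpace} (u v : nat -> X) l m :
  cv u l -> cv v m -> cv (fun n => hsub (u n) (v n)) (hsub l m).
Proof.
  intros Hu Hv eps He. destruct (Hu (eps/4)) as [N1 H1]. lra. destruct (Hv (eps/4)) as [N2 H2]. lra.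
  exists (max N1 N2). intros n Hn. rewrite sub_swap.
  eapply Rle_lt_trans. apply ns_sub_le.
  assert (ns (hsub (u n) l) < eps/4) by (apply H1; lia).
  assert (ns (hsub (v n) m) < eps/4) by (apply H2; lia). lra.
Qed.

Lemma cv_opp {X : HilbertSpace} (u : nat -> X) l :
  cv u l -> cv (fun n => hs_opp (u n)) (hs_opp l).
Proof. intros Hu eps He. destruct (Hu eps He) as [N HN]. exists N. intros n Hn.
  rewrite opp_sub2, ns_opp. auto. Qed.

Lemma small_inner {X : HilbertSpace} (g : X) eps : eps > 0 ->
  exists d, d > 0 /\ forall z : X, ns z < d ->
    Rabs (Cre (hs_inner g z)) < eps /\ Rabs (Cim (hs_inner g z)) < eps.
Proof.
  intro He. exists (eps * eps / (ns g + 1)). split.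
  - pose proof (ns_ge0 g). apply Rdiv_lt_0_compat; nra.
  - intros z Hz. pose proof (ns_ge0 g). pose proof (ns_ge0 z).
    assert (ns g * ns z < eps * eps).
    { assert (ns z * (ns g + 1) < eps * eps).
      { apply Rmult_lt_reg_r with (/ (ns g + 1)). apply Rinv_0_lt_compat; lra.
        replace (ns z * (ns g + 1) * / (ns g + 1)) with (ns z) by (field; lra). exact Hz. }
      nra. }
    pose proof (CS_re g z). pose proof (CS_im g z).
    split; apply Rabs_def1; nra.
Qed.

Lemma cv_inner_r {X : HilbertSpace} (g : X) (u : nat -> X) l : cv u l ->
  Un_cv (fun n => Cre (hs_inner g (u n))) (Cre (hs_inner g l)) /\
  Un_cv (fun n => Cim (hs_inner g (u n))) (Cim (hs_inner g l)).
Proof.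
  intro Hu. split; intros eps He; destruct (small_inner g eps He) as [d [Hd Hs]];
  destruct (Hu d Hd) as [N HN]; exists N; intros n Hn; unfold R_dist;
  specialize (Hs _ (HN n Hn)); rewrite inner_subr in Hs; simpl in Hs; destruct Hs; auto.
Qed.

Lemma complete_cv {X : HilbertSpace} (u : nat -> X) :
  (forall eps, eps > 0 -> exists N, forall n m, (n >= N)%nat -> (m >= N)%nat -> ns (hsub (u n) (u m)) < eps) ->
  exists l, cv u l.
Proof.
  intro H. destruct (hs_complete u) as [l Hl].
  - intros eps He. destruct (H (eps*eps)) as [N HN]. nra. exists N. intros n m Hn Hm.
    apply sqrt_lt_sq. apply ns_ge0. lra. apply HN; auto.
  - exists l. apply hconv_cv. exact Hl.
Qed.


Lemma choice_nat {T : Type} (P : nat -> T -> Prop) :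
  (forall n, exists x, P n x) -> exists f : nat -> T, forall n, P n (f n).
Proof.
  intro H. exists (fun n => proj1_sig (constructive_indefinite_description _ (H n))).
  intro n. exact (proj2_sig (constructive_indefinite_description _ (H n))).
Qed.

Lemma small_inv eps : eps > 0 -> exists N, forall n, (n >= N)%nat -> / (INR n + 1) < eps.
Proof.
  intro He. destruct (archimed_cor1 eps He) as [N [HN HN0]]. exists N. intros n Hn.
  apply le_INR in Hn. assert (0 < INR N) by (apply lt_0_INR; lia).
  eapply Rle_lt_trans; [|exact HN]. apply Rinv_le_contravar; lra.
Qed.

Lemma cv_inv0 : Un_cv (fun n => / (INR n + 1)) 0.
Proof.
  intros eps He. destruct (small_inv eps He) as [N HN]. exists N. intros n Hn.
  unfold R_dist. rewrite Rminus_0_r. pose proof (pos_INR n).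
  rewrite Rabs_right. auto. apply Rle_ge. left. apply Rinv_0_lt_compat. lra.
Qed.

Lemma cv_cst (c : R) : Un_cv (fun _ => c) c.
Proof. intros eps He. exists 0%nat. intros. unfold R_dist. rewrite Rminus_diag, Rabs_R0. lra. Qed.

Lemma sub_add_r {X : HilbertSpace} (x a b : X) : hsub x (hs_add a b) = hsub (hsub x a) b.
Proof. unfold hsub. rewrite oppD, hs_addA. reflexivity. Qed.

Lemma scal_add_self {X : HilbertSpace} (x : X) : hs_add x x = hs_scal (mkCx 2 0) x.
Proof.
  replace (mkCx 2 0) with (Cadd Defs.C1 Defs.C1) by (apply Cx_ext; simpl; ring).
  rewrite hs_scalDl, hs_scal1. reflexivity.
Qed.

Definition subspace {X : HilbertSpace} (S : X -> Prop) : Prop :=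
  S hs_zero /\ (forall x y, S x -> S y -> S (hs_add x y)) /\
  (forall a x, S x -> S (hs_scal a x)).

Theorem projection {X : HilbertSpace} (S : X -> Prop) :
  subspace S ->
  (forall (u : nat -> X) l, (forall n, S (u n)) -> cv u l -> S l) ->
  (forall z, (forall s, S s -> hs_inner s z = Defs.C0) -> z = hs_zero) ->
  forall x, S x.
Proof.
  intros [S0 [Sadd Sscal]] Sclo Sort x.
  set (E := fun r => exists s, S s /\ r = - ns (hsub x s)).
  destruct (completeness E) as [m [Hub Hlub]].
  { exists 0. intros r [s [_ ->]]. pose proof (ns_ge0 (hsub x s)). lra. }
  { exists (- ns (hsub x hs_zero)). exists hs_zero. auto. }
  set (d2 := - m).
  assert (F1 : forall s, S s -> d2 <= ns (hsub x s)).
  { intros s Hs. assert (E (- ns (hsub x s))) by (exists s; auto).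
    specialize (Hub _ H). unfold d2. lra. }
  assert (F2 : forall eps, eps > 0 -> exists s, S s /\ ns (hsub x s) < d2 + eps).
  { intros eps He. apply NNPP. intro Hn.
    assert (is_upper_bound E (m - eps)).
    { intros r [s [Hs ->]]. destruct (Rle_lt_dec (- ns (hsub x s)) (m - eps)) as [|Hlt]; auto.
      exfalso. apply Hn. exists s. split; auto. unfold d2. lra. }
    specialize (Hlub _ H). lra. }
  destruct (choice_nat (fun n s => S s /\ ns (hsub x s) < d2 + / (INR n + 1))) as [u Hu].
  { intro n. apply F2. apply Rinv_0_lt_compat. pose proof (pos_INR n). lra. }
  assert (Cau : forall n k, ns (hsub (u n) (u k)) <= 2 * / (INR n + 1) + 2 * / (INR k + 1)).
  { intros n k. destruct (Hu n) as [Sn Hn]. destruct (Hu k) as [Sk Hk].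
    set (mid := hs_scal (mkCx (/2) 0) (hs_add (u n) (u k))).
    assert (Smid : S mid) by (apply Sscal; apply Sadd; auto).
    specialize (F1 _ Smid).
    pose proof (ns_add (hsub x (u n)) (hsub x (u k))) as P1.
    pose proof (ns_sub (hsub x (u n)) (hsub x (u k))) as P2.
    assert (Q1 : hs_add (hsub x (u n)) (hsub x (u k)) = hs_scal (mkCx 2 0) (hsub x mid)).
    { rewrite <- sub_addACA, scal_sub, scal_add_self. unfold mid. rewrite hs_scalA.
      replace (Cmul (mkCx 2 0) (mkCx (/ 2) 0)) with Defs.C1 by (apply Cx_ext; simpl; field).
      rewrite hs_scal1. reflexivity. }
    assert (Q2 : ns (hsub (hsub x (u n)) (hsub x (u k))) = ns (hsub (u n) (u k))).
    { rewrite sub_swap, subrr. unfold hsub at 1. rewrite hs_add0, ns_opp. reflexivity. }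
    rewrite Q1, ns_scal in P1. simpl in P1. lra. }
  assert (Hcauchy : forall eps, eps > 0 -> exists N, forall n k, (n >= N)%nat -> (k >= N)%nat ->
            ns (hsub (u n) (u k)) < eps).
  { intros eps He. destruct (small_inv (eps/4)) as [N HN]. lra. exists N. intros n k Hn Hk.
    specialize (HN n Hn) as A. specialize (HN k Hk). pose proof (Cau n k). lra. }
  destruct (complete_cv u Hcauchy) as [s Hs].
  assert (Ss : S s) by (apply (Sclo u); auto; intro n; apply Hu).
  set (z := hsub x s).
  assert (Hz : forall t, S t -> hs_inner t z = Defs.C0).
  { intros t St. set (v := hs_inner t z). set (vr := Cre v). set (vi := Cim v).
    set (eps := / (ns t + 1)). pose proof (ns_ge0 t).
    assert (Heps : 0 < eps) by (apply Rinv_0_lt_compat; lra).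
    assert (Hepst : eps * ns t < 1).
    { unfold eps. apply Rmult_lt_reg_l with (ns t + 1). lra.
      replace ((ns t + 1) * (/ (ns t + 1) * ns t)) with (ns t) by (field; lra). lra. }
    set (c := mkCx (eps * vr) (- (eps * vi))).
    assert (Ineq : forall n, 2 * eps * (vr * Cre (hs_inner t (hsub x (u n))) + vi * Cim (hs_inner t (hsub x (u n))))
                     - eps * eps * (vr * vr + vi * vi) * ns t <= / (INR n + 1)).
    { intro n. destruct (Hu n) as [Sn Hn].
      assert (Sc : S (hs_add (u n) (hs_scal c t))) by (apply Sadd; auto).
      specialize (F1 _ Sc). rewrite sub_add_r, ns_sub, ns_scal, inner_scalr in F1.
      rewrite (hs_innerC t (hsub x (u n))) in *. unfold c in F1. simpl in F1. simpl. nra. }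
    assert (Hzn : cv (fun n => hsub x (u n)) z) by (apply cv_sub; auto; apply cv_const).
    destruct (cv_inner_r t _ _ Hzn) as [Cr Ci]. fold v in Cr, Ci.
    assert (Lim : Un_cv (fun n => 2 * eps * (vr * Cre (hs_inner t (hsub x (u n))) + vi * Cim (hs_inner t (hsub x (u n))))
                     - eps * eps * (vr * vr + vi * vi) * ns t)
                   (2 * eps * (vr * vr + vi * vi) - eps * eps * (vr * vr + vi * vi) * ns t)).
    { apply CV_minus; [|apply cv_cst]. apply CV_mult; [apply cv_cst|].
      apply CV_plus; apply CV_mult; try apply cv_cst; auto. }
    pose proof (Rle_cv_lim Ineq Lim cv_inv0) as L.
    assert (vr * vr + vi * vi = 0).
    { assert (0 <= vr * vr + vi * vi) by nra.
      assert (eps * (vr * vr + vi * vi) * (2 - eps * ns t) <= 0) by nra.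
      assert (0 < eps * (2 - eps * ns t)) by nra. nra. }
    assert (vr = 0) by nra. assert (vi = 0) by nra.
    apply Cx_ext; simpl; assumption. }
  specialize (Sort z Hz). unfold z in Sort. apply sub_eq0 in Sort. subst. exact Ss.
Qed.



Definition padd {H K : HilbertSpace} (p q : H * K) : H * K := (hs_add (fst p) (fst q), hs_add (snd p) (snd q)).
Definition popp {H K : HilbertSpace} (p : H * K) : H * K := (hs_opp (fst p), hs_opp (snd p)).
Definition pscal {H K : HilbertSpace} a (p : H * K) : H * K := (hs_scal a (fst p), hs_scal a (snd p)).
Definition pinner {H K : HilbertSpace} (p q : H * K) : Cx := Cadd (hs_inner (fst p) (fst q)) (hs_inner (snd p) (snd q)).
Definition pzero {H K : HilbertSpace} : H * K := (hs_zero, hs_zero).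

Lemma p_addA {H K : HilbertSpace} (x y z : H * K) : padd x (padd y z) = padd (padd x y) z.
Proof. unfold padd; simpl; rewrite !hs_addA; reflexivity. Qed.
Lemma p_addC {H K : HilbertSpace} (x y : H * K) : padd x y = padd y x.
Proof. unfold padd; rewrite (hs_addC (fst x)), (hs_addC (snd x)); reflexivity. Qed.
Lemma p_add0 {H K : HilbertSpace} (x : H * K) : padd pzero x = x.
Proof. unfold padd, pzero; simpl; rewrite !hs_add0; destruct x; reflexivity. Qed.
Lemma p_addN {H K : HilbertSpace} (x : H * K) : padd x (popp x) = pzero.
Proof. unfold padd, popp, pzero; simpl; rewrite !hs_addN; reflexivity. Qed.
Lemma p_scal1 {H K : HilbertSpace} (x : H * K) : pscal Defs.C1 x = x.
Proof. unfold pscal; rewrite !hs_scal1; destruct x; reflexivity. Qed.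
Lemma p_scalA {H K : HilbertSpace} a b (x : H * K) : pscal a (pscal b x) = pscal (Cmul a b) x.
Proof. unfold pscal; simpl; rewrite !hs_scalA; reflexivity. Qed.
Lemma p_scalDl {H K : HilbertSpace} a b (x : H * K) : pscal (Cadd a b) x = padd (pscal a x) (pscal b x).
Proof. unfold pscal, padd; simpl; rewrite !hs_scalDl; reflexivity. Qed.
Lemma p_scalDr {H K : HilbertSpace} a (x y : H * K) : pscal a (padd x y) = padd (pscal a x) (pscal a y).
Proof. unfold pscal, padd; simpl; rewrite !hs_scalDr; reflexivity. Qed.
Lemma p_innerDl {H K : HilbertSpace} (x y z : H * K) : pinner (padd x y) z = Cadd (pinner x z) (pinner y z).
Proof. unfold pinner, padd; simpl; rewrite !hs_innerDl.
  destruct (hs_inner (fst x) (fst z)), (hs_inner (fst y) (fst z)), (hs_inner (snd x) (snd z)), (hs_inner (snd y) (snd z)); cxs. Qed.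
Lemma p_innerZl {H K : HilbertSpace} a (x y : H * K) : pinner (pscal a x) y = Cmul a (pinner x y).
Proof. unfold pinner, pscal; simpl; rewrite !hs_innerZl.
  destruct a, (hs_inner (fst x) (fst y)), (hs_inner (snd x) (snd y)); cxs. Qed.
Lemma p_innerC {H K : HilbertSpace} (x y : H * K) : pinner y x = Cconj (pinner x y).
Proof. unfold pinner; rewrite (hs_innerC (fst x)), (hs_innerC (snd x)).
  destruct (hs_inner (fst x) (fst y)), (hs_inner (snd x) (snd y)); cxs. Qed.
Lemma p_inner_ge0 {H K : HilbertSpace} (x : H * K) : 0 <= Cre (pinner x x).
Proof. unfold pinner; simpl. pose proof (ns_ge0 (fst x)); pose proof (ns_ge0 (snd x)). unfold ns in *. lra. Qed.
Lemma p_inner_eq0 {H K : HilbertSpace} (x : H * K) : pinner x x = Defs.C0 -> x = pzero.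
Proof.
  intro E. apply (f_equal Cre) in E. unfold pinner in E. simpl in E.
  pose proof (ns_ge0 (fst x)); pose proof (ns_ge0 (snd x)). unfold ns in *.
  destruct x as [a b]. unfold pzero. simpl in *. f_equal; apply ns_eq0; unfold ns; lra.
Qed.
Lemma p_complete {H K : HilbertSpace} (u : nat -> H * K) :
    (forall eps, eps > 0 -> exists N, forall n m, (n >= N)%nat -> (m >= N)%nat ->
        sqrt (Cre (pinner (padd (u n) (popp (u m))) (padd (u n) (popp (u m))))) < eps) ->
    exists l, forall eps, eps > 0 -> exists N, forall n, (n >= N)%nat ->
        sqrt (Cre (pinner (padd (u n) (popp l)) (padd (u n) (popp l)))) < eps.
Proof.
  intro Hc.
  assert (C1' : forall eps, eps > 0 -> exists N, forall n m, (n >= N)%nat -> (m >= N)%nat ->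
     ns (hsub (fst (u n)) (fst (u m))) < eps /\ ns (hsub (snd (u n)) (snd (u m))) < eps).
  { intros eps He. destruct (Hc (sqrt eps)) as [N HN]. apply sqrt_lt_R0; lra.
    exists N. intros n m Hn Hm. specialize (HN n m Hn Hm).
    unfold pinner, padd, popp in HN; simpl in HN.
    pose proof (ns_ge0 (hsub (fst (u n)) (fst (u m)))). pose proof (ns_ge0 (hsub (snd (u n)) (snd (u m)))).
    unfold ns, hsub in *.
    apply sqrt_lt_sq in HN; [|lra|apply sqrt_lt_R0; lra]. rewrite sqrt_sqrt in HN by lra. lra. }
  destruct (complete_cv (fun n => fst (u n))) as [l1 H1].
  { intros eps He. destruct (C1' eps He) as [N HN]. exists N. intros. apply HN; auto. }
  destruct (complete_cv (fun n => snd (u n))) as [l2 H2].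
  { intros eps He. destruct (C1' eps He) as [N HN]. exists N. intros. apply HN; auto. }
  exists (l1, l2). intros eps He.
  destruct (H1 (eps*eps/2)) as [N1 HN1]. nra. destruct (H2 (eps*eps/2)) as [N2 HN2]. nra.
  exists (max N1 N2). intros n Hn. specialize (HN1 n ltac:(lia)). specialize (HN2 n ltac:(lia)).
  unfold pinner, padd, popp; simpl. apply sqrt_lt_sq; [|lra|].
  - pose proof (ns_ge0 (hsub (fst (u n)) l1)). pose proof (ns_ge0 (hsub (snd (u n)) l2)). unfold ns, hsub in *. lra.
  - unfold ns, hsub in *. lra.
Qed.

Definition prod_space (H K : HilbertSpace) : HilbertSpace :=
  {| hs_car := (H * K)%type; hs_zero := pzero; hs_add := padd; hs_opp := popp; hs_scal := pscal;
     hs_inner := pinner; hs_addA := p_addA; hs_addC := p_addC; hs_add0 := p_add0; hs_addN := p_addN;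
     hs_scal1 := p_scal1; hs_scalA := p_scalA; hs_scalDl := p_scalDl; hs_scalDr := p_scalDr;
     hs_innerDl := p_innerDl; hs_innerZl := p_innerZl; hs_innerC := p_innerC;
     hs_inner_ge0 := p_inner_ge0; hs_inner_eq0 := p_inner_eq0; hs_complete := p_complete |}.

Lemma prod_cv {H K : HilbertSpace} (u : nat -> prod_space H K) l :
  cv u l -> cv (fun n => fst (u n)) (fst l) /\ cv (fun n => snd (u n)) (snd l).
Proof.
  intro Hu. split; intros eps He; destruct (Hu eps He) as [N HN]; exists N; intros n Hn;
  specialize (HN n Hn); unfold ns in HN; simpl in HN; unfold pinner in HN; simpl in HN;
  pose proof (ns_ge0 (hsub (fst (u n)) (fst l))); pose proof (ns_ge0 (hsub (snd (u n)) (snd l)));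
  unfold ns, hsub in *; simpl in *; lra.
Qed.



Lemma green {H K : HilbertSpace} (A : lrel H) (G : brel H K) :
  unitary_boundary_triple A G -> forall f f' h h', G (f, f') (h, h') ->
  Cim (hs_inner f' f) = Cim (hs_inner h' h).
Proof.
  intros (_ & _ & _ & _ & HU) f f' h h' Hg.
  pose proof (proj1 (HU _ _) Hg) as Hk. simpl in Hk. specialize (Hk _ _ _ _ Hg).
  apply (f_equal Cim) in Hk. unfold Csub, Cadd, Copp in Hk. simpl in Hk.
  rewrite (im_sym f f'), (im_sym h h') in *. lra.
Qed.

Lemma G_closed {H K : HilbertSpace} (A : lrel H) (G : brel H K) :
  unitary_boundary_triple A G -> forall (f f' : nat -> H) (h h' : nat -> K) f0 f0' h0 h0',
  (forall n, G (f n, f' n) (h n, h' n)) -> cv f f0 -> cv f' f0' -> cv h h0 -> cv h' h0' ->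
  G (f0, f0') (h0, h0').
Proof.
  intros HG f f' h h' f0 f0' h0 h0' Hn C1 C2 C3 C4.
  destruct HG as (_ & _ & _ & _ & HU). apply HU. simpl. intros g g' m m' Hgm.
  assert (Hid : forall n, Csub (hs_inner g' (f n)) (hs_inner g (f' n)) =
                      Csub (hs_inner m' (h n)) (hs_inner m (h' n))).
  { intro n. pose proof (proj1 (HU _ _) (Hn n)) as Hk. simpl in Hk. apply Hk. exact Hgm. }
  destruct (cv_inner_r g' _ _ C1) as [a1 b1]. destruct (cv_inner_r g _ _ C2) as [a2 b2].
  destruct (cv_inner_r m' _ _ C3) as [a3 b3]. destruct (cv_inner_r m _ _ C4) as [a4 b4].
  apply Cx_ext; simpl.
  - apply (UL_sequence (fun n => Cre (hs_inner g' (f n)) + - Cre (hs_inner g (f' n)))).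
    + apply CV_plus; auto. apply CV_opp; auto.
    + eapply Un_cv_ext. intro n. specialize (Hid n). apply (f_equal Cre) in Hid. simpl in Hid. symmetry. exact Hid.
      apply CV_plus; auto. apply CV_opp; auto.
  - apply (UL_sequence (fun n => Cim (hs_inner g' (f n)) + - Cim (hs_inner g (f' n)))).
    + apply CV_plus; auto. apply CV_opp; auto.
    + eapply Un_cv_ext. intro n. specialize (Hid n). apply (f_equal Cim) in Hid. simpl in Hid. symmetry. exact Hid.
      apply CV_plus; auto. apply CV_opp; auto.
Qed.

Lemma G_zero {H K : HilbertSpace} (A : lrel H) (G : brel H K) :
  unitary_boundary_triple A G -> G (hs_zero, hs_zero) (hs_zero, hs_zero).
Proof. intros ((L & _ & _) & _). exact L. Qed.

Lemma G_add {H K : HilbertSpace} (A : lrel H) (G : brel H K) :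
  unitary_boundary_triple A G -> forall f1 f1' h1 h1' f2 f2' h2 h2',
  G (f1, f1') (h1, h1') -> G (f2, f2') (h2, h2') ->
  G (hs_add f1 f2, hs_add f1' f2') (hs_add h1 h2, hs_add h1' h2').
Proof. intros ((_ & L & _) & _) f1 f1' h1 h1' f2 f2' h2 h2' E1 E2. exact (L _ _ _ _ E1 E2). Qed.

Lemma G_scal {H K : HilbertSpace} (A : lrel H) (G : brel H K) :
  unitary_boundary_triple A G -> forall c f f' h h', G (f, f') (h, h') ->
  G (hs_scal c f, hs_scal c f') (hs_scal c h, hs_scal c h').
Proof. intros ((_ & _ & L) & _) c f f' h h' E. exact (L c _ _ E). Qed.

Lemma G_sub {H K : HilbertSpace} (A : lrel H) (G : brel H K) :
  unitary_boundary_triple A G -> forall f1 f1' h1 h1' f2 f2' h2 h2',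
  G (f1, f1') (h1, h1') -> G (f2, f2') (h2, h2') ->
  G (hsub f1 f2, hsub f1' f2') (hsub h1 h2, hsub h1' h2').
Proof.
  intros HG f1 f1' h1 h1' f2 f2' h2 h2' E1 E2.
  pose proof (G_scal A G HG (Copp Defs.C1) _ _ _ _ E2) as E3. rewrite !scalN1 in E3.
  exact (G_add A G HG _ _ _ _ _ _ _ _ E1 E3).
Qed.

Lemma Im_scal_self {X : HilbertSpace} a (x : X) : Cim (hs_inner (hs_scal a x) x) = Cim a * ns x.
Proof. rewrite hs_innerZl. simpl. rewrite im_self. unfold ns. ring. Qed.

Lemma bound_lem {H K : HilbertSpace} (A : lrel H) (G : brel H K) :
  unitary_boundary_triple A G -> forall lam (y phi : H) (a psi : K),
  G (y, hs_add phi (hs_scal lam y)) (a, hs_opp (hs_add psi (hs_scal lam a))) ->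
  Cim lam * Cim lam * (ns y + ns a) <= 2 * (ns phi + ns psi).
Proof.
  intros HG lam y phi a psi Hg. pose proof (green A G HG _ _ _ _ Hg) as E.
  rewrite hs_innerDl, inner_oppl, hs_innerDl in E. simpl in E. rewrite !Im_scal_self in E.
  set (p := Cim (hs_inner phi y)) in *. set (q := Cim (hs_inner psi a)) in *.
  pose proof (CS_im phi y) as C1. pose proof (CS_im psi a) as C2. fold p q in C1, C2.
  pose proof (ns_ge0 y). pose proof (ns_ge0 a). pose proof (ns_ge0 phi). pose proof (ns_ge0 psi).
  set (c := Cim lam) in *. set (Y := ns y + ns a).
  assert (HY : c * Y = - (p + q)) by (unfold Y; lra).
  assert (c * c * Y * Y <= 2 * (ns phi + ns psi) * Y).
  { replace (c * c * Y * Y) with ((c * Y) * (c * Y)) by ring. rewrite HY.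
    assert (ns phi * ns y + ns psi * ns a <= (ns phi + ns psi) * Y) by (unfold Y; nra).
    assert (0 <= (p - q) * (p - q)) by apply Rle_0_sqr. lra. }
  destruct (Req_dec Y 0) as [HY0|HY0].
  - rewrite HY0. nra.
  - assert (0 < Y) by (unfold Y in *; lra).
    apply Rmult_le_reg_r with Y; auto.
Qed.



Definition Ssurj {H K : HilbertSpace} (G : brel H K) (lam : Cx) (p : prod_space H K) : Prop :=
  exists (y : H) (a : K), G (y, hs_add (fst p) (hs_scal lam y)) (a, hs_opp (hs_add (snd p) (hs_scal lam a))).

Lemma sub_sub_cancel {X : HilbertSpace} (p q : X) : hsub p (hsub p q) = q.
Proof. unfold hsub. rewrite oppD, oppK, hs_addA, hs_addN. apply hs_add0. Qed.

Lemma surj {H K : HilbertSpace} (A : lrel H) (G : brel H K) :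
  unitary_boundary_triple A G -> forall lam, Cim lam <> 0 ->
  forall p : prod_space H K, Ssurj G lam p.
Proof.
  intros HG lam Hlam. apply projection.
  - split; [|split].
    + exists hs_zero, hs_zero. simpl. rewrite !scal0r, !hs_add0, opp0. apply (G_zero A G HG).
    + intros x y [y1 [a1 E1]] [y2 [a2 E2]]. exists (hs_add y1 y2), (hs_add a1 a2).
      pose proof (G_add A G HG _ _ _ _ _ _ _ _ E1 E2) as E. simpl.
      rewrite <- oppD, addACA, <- hs_scalDr, addACA, <- hs_scalDr in E. exact E.
    + intros c x [y [a E]]. exists (hs_scal c y), (hs_scal c a).
      pose proof (G_scal A G HG c _ _ _ _ E) as E'. simpl.
      rewrite scal_opp, !hs_scalDr, !hs_scalA in E'.
      replace (Cmul c lam) with (Cmul lam c) in E' by (destruct c, lam; cxs).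
      rewrite <- !hs_scalA in E'. exact E'.
  - intros u l Hu Hl.
    destruct (choice_nat (fun n ya => G (fst ya, hs_add (fst (u n)) (hs_scal lam (fst ya)))
                 (snd ya, hs_opp (hs_add (snd (u n)) (hs_scal lam (snd ya)))))) as [w Hw].
    { intro n. destruct (Hu n) as [y [a E]]. exists (y, a). exact E. }
    destruct (prod_cv u l Hl) as [Cphi Cpsi].
    set (c2 := Cim lam * Cim lam). assert (Hc2 : 0 < c2) by (unfold c2; nra).
    assert (Bd : forall n k, c2 * (ns (hsub (fst (w n)) (fst (w k))) + ns (hsub (snd (w n)) (snd (w k))))
                  <= 2 * (ns (hsub (fst (u n)) (fst (u k))) + ns (hsub (snd (u n)) (snd (u k))))).
    { intros n k. pose proof (G_sub A G HG _ _ _ _ _ _ _ _ (Hw n) (Hw k)) as E.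
      rewrite opp_sub2, !sub_addACA, <- !scal_sub in E.
      exact (bound_lem A G HG _ _ _ _ _ E). }
    assert (Cau : forall (v : nat -> H) (v0 : H), cv v v0 -> forall eps, eps > 0 -> exists N,
               forall n k, (n >= N)%nat -> (k >= N)%nat -> ns (hsub (v n) (v k)) < eps).
    { intros v v0 Cv eps He. destruct (Cv (eps/4)) as [N HN]. lra. exists N. intros n k Hn Hk.
      rewrite (sub_via _ _ v0). eapply Rle_lt_trans. apply ns_sub_le.
      specialize (HN n Hn) as A1. specialize (HN k Hk). lra. }
    assert (CauK : forall (v : nat -> K) (v0 : K), cv v v0 -> forall eps, eps > 0 -> exists N,
               forall n k, (n >= N)%nat -> (k >= N)%nat -> ns (hsub (v n) (v k)) < eps).
    { intros v v0 Cv eps He. destruct (Cv (eps/4)) as [N HN]. lra. exists N. intros n k Hn Hk.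
      rewrite (sub_via _ _ v0). eapply Rle_lt_trans. apply ns_sub_le.
      specialize (HN n Hn) as A1. specialize (HN k Hk). lra. }
    assert (Wc : forall eps, eps > 0 -> exists N, forall n k, (n >= N)%nat -> (k >= N)%nat ->
               ns (hsub (fst (w n)) (fst (w k))) < eps /\ ns (hsub (snd (w n)) (snd (w k))) < eps).
    { intros eps He. destruct (Cau _ _ Cphi (c2 * eps / 4)) as [N1 H1].
      apply Rdiv_lt_0_compat; nra.
      destruct (CauK _ _ Cpsi (c2 * eps / 4)) as [N2 H2]. apply Rdiv_lt_0_compat; nra.
      exists (max N1 N2). intros n k Hn Hk. specialize (Bd n k).
      specialize (H1 n k ltac:(lia) ltac:(lia)). specialize (H2 n k ltac:(lia) ltac:(lia)).
      pose proof (ns_ge0 (hsub (fst (w n)) (fst (w k)))). pose proof (ns_ge0 (hsub (snd (w n)) (snd (w k)))).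
      assert (c2 * (ns (hsub (fst (w n)) (fst (w k))) + ns (hsub (snd (w n)) (snd (w k)))) < c2 * eps) by lra.
      split; nra. }
    destruct (complete_cv (fun n => fst (w n))) as [y Cy].
    { intros eps He. destruct (Wc eps He) as [N HN]. exists N. intros n k Hn Hk. apply HN; auto. }
    destruct (complete_cv (fun n => snd (w n))) as [a Ca].
    { intros eps He. destruct (Wc eps He) as [N HN]. exists N. intros n k Hn Hk. apply HN; auto. }
    exists y, a.
    apply (G_closed A G HG _ _ _ _ _ _ _ _ Hw Cy).
    + apply cv_add; auto. apply cv_scal; auto.
    + exact Ca.
    + apply cv_opp. apply cv_add; auto. apply cv_scal; auto.
  - intros [u v] Hz.
    assert (Hk : brel_Kadj G (v, hs_scal (Copp (Cconj lam)) v) (u, hs_scal (Cconj lam) u)).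
    { simpl. intros f f' h h' Hg.
      assert (Ss : Ssurj G lam (hsub f' (hs_scal lam f), hsub (hs_opp h') (hs_scal lam h))).
      { exists f, h. simpl. rewrite !subK, oppK. exact Hg. }
      specialize (Hz _ Ss). simpl in Hz. unfold pinner in Hz. simpl in Hz.
      rewrite !inner_subl, !hs_innerZl, inner_oppl in Hz.
      rewrite !inner_scalr.
      apply (f_equal Cre) in Hz as Hr. apply (f_equal Cim) in Hz as Hi.
      destruct lam as [lr li].
      destruct (hs_inner f' u), (hs_inner f u), (hs_inner h' v), (hs_inner h v).
      unfold Csub, Cadd, Copp, Cmul, Cconj, Defs.C0 in *. simpl in *. apply Cx_ext; simpl; lra. }
    destruct HG as (HL & HO & HD & HDe & HU). pose proof (proj2 (HU _ _) Hk) as Hg.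
    pose proof (green A G (conj HL (conj HO (conj HD (conj HDe HU)))) _ _ _ _ Hg) as E.
    rewrite !Im_scal_self in E. simpl in E.
    pose proof (ns_ge0 u). pose proof (ns_ge0 v).
    assert (Cim lam * (ns u + ns v) = 0) by lra.
    assert (ns u + ns v = 0).
    { apply Rmult_eq_reg_l with (Cim lam); auto. lra. }
    simpl. unfold pzero. f_equal; apply ns_eq0; lra.
Qed.


Lemma core {H K : HilbertSpace} (A : lrel H) (G : brel H K) (lam : Cx) :
  unitary_boundary_triple A G -> Cim lam <> 0 -> weyl_condition G lam ->
  forall (f f' : nat -> H) (h h' : nat -> K) l,
  (forall n, G (f n, f' n) (h n, h' n)) -> cv f hs_zero -> cv f' hs_zero -> cv h l -> l = hs_zero.
Proof.
  intros HG Hlam HW f f' h h' l HGn Cf Cf' Ch.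
  set (phi := fun n => hsub (f' n) (hs_scal lam (f n))).
  destruct (choice_nat (fun n (ya : H * K) => G (fst ya, hs_add (phi n) (hs_scal lam (fst ya)))
       (snd ya, hs_opp (hs_add hs_zero (hs_scal lam (snd ya)))))) as [w Hw].
  { intro n. destruct (surj A G HG lam Hlam ((phi n, hs_zero) : prod_space H K)) as [y [a E]].
    exists (y, a). exact E. }
  assert (Cphi : cv phi hs_zero).
  { pose proof (cv_sub _ _ _ _ Cf' (cv_scal lam _ _ Cf)) as C. rewrite scal0r, subrr in C. exact C. }
  set (c2 := Cim lam * Cim lam). assert (Hc2 : 0 < c2) by (unfold c2; nra).
  assert (Bd : forall n, c2 * (ns (fst (w n)) + ns (snd (w n))) <= 2 * ns (phi n)).
  { intro n. pose proof (bound_lem A G HG _ _ _ _ _ (Hw n)) as B. rewrite ns0 in B. fold c2 in B. lra. }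
  assert (Cw : cv (fun n => fst (w n)) hs_zero /\ cv (fun n => snd (w n)) hs_zero).
  { assert (G0 : forall eps, eps > 0 -> exists N, forall n, (n >= N)%nat ->
        ns (fst (w n)) < eps /\ ns (snd (w n)) < eps).
    { intros eps He. destruct (Cphi (c2 * eps / 2)) as [N HN]. apply Rdiv_lt_0_compat; nra.
      exists N. intros n Hn. specialize (HN n Hn). rewrite subr0 in HN. specialize (Bd n).
      pose proof (ns_ge0 (fst (w n))). pose proof (ns_ge0 (snd (w n))).
      assert (c2 * (ns (fst (w n)) + ns (snd (w n))) < c2 * eps) by lra.
      assert (ns (fst (w n)) + ns (snd (w n)) < eps) by (apply Rmult_lt_reg_l with c2; auto).
      split; lra. }
    split; intros eps He; destruct (G0 eps He) as [N HN]; exists N; intros n Hn;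
      rewrite subr0; apply HN; auto. }
  destruct Cw as [Cy Ca].
  set (e := fun n => hsub (f n) (fst (w n))).
  assert (He : forall n, G (e n, hs_scal lam (e n)) (hsub (h n) (snd (w n)),
                hsub (h' n) (hs_opp (hs_add hs_zero (hs_scal lam (snd (w n))))))).
  { intro n. pose proof (G_sub A G HG _ _ _ _ _ _ _ _ (HGn n) (Hw n)) as E.
    replace (hs_scal lam (e n)) with (hsub (f' n) (hs_add (phi n) (hs_scal lam (fst (w n))))).
    exact E. unfold e, phi. rewrite sub_add_r, sub_sub_cancel, scal_sub. reflexivity. }
  apply (HW (fun n => hsub (h n) (snd (w n))) (fun n => hsub (h' n) (hs_opp (hs_add hs_zero (hs_scal lam (snd (w n))))))).
  - intro n. exists (e n). apply He.
  - apply hconv_cv. pose proof (cv_sub _ _ _ _ Ch Ca) as C. rewrite subr0 in C. exact C.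
  - intros eps Heps.
    assert (Ce : cv e hs_zero).
    { pose proof (cv_sub _ _ _ _ Cf Cy) as C. rewrite subrr in C. exact C. }
    destruct (Ce (eps / (Rabs (Cim lam) + 1))) as [N HN].
    { apply Rdiv_lt_0_compat. lra. pose proof (Rabs_pos (Cim lam)). lra. }
    exists N. intros n Hn. specialize (HN n Hn). rewrite subr0 in HN.
    pose proof (green A G HG _ _ _ _ (He n)) as E. rewrite Im_scal_self in E.
    unfold R_dist. rewrite Rminus_0_r, <- E, Rabs_mult, (Rabs_right (ns (e n))) by (apply Rle_ge, ns_ge0).
    pose proof (Rabs_pos (Cim lam)). pose proof (ns_ge0 (e n)).
    apply Rle_lt_trans with ((Rabs (Cim lam) + 1) * ns (e n)). nra.
    apply Rmult_lt_reg_r with (/ (Rabs (Cim lam) + 1)). apply Rinv_0_lt_compat; lra.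
    replace ((Rabs (Cim lam) + 1) * ns (e n) * / (Rabs (Cim lam) + 1)) with (ns (e n)) by (field; lra).
    exact HN.
Qed.

Lemma part1 {H K : HilbertSpace} (A : lrel H) (G : brel H K) :
  unitary_boundary_triple A G -> closable_Gamma0 G -> forall lam, Cim lam <> 0 -> weyl_condition G lam.
Proof.
  intros HG Hcl lam Hlam h k hl Hw Hh Him.
  destruct (choice_nat (fun n f => G (f, hs_scal lam f) (h n, k n))) as [f Hf].
  { intro n. exact (Hw n). }
  assert (Hns : forall n, Cim lam * ns (f n) = Cim (hs_inner (k n) (h n))).
  { intro n. rewrite <- (green A G HG _ _ _ _ (Hf n)), Im_scal_self. reflexivity. }
  assert (Cf : cv f hs_zero).
  { intros eps He. destruct (Him (Rabs (Cim lam) * eps)) as [N HN].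
    { apply Rmult_gt_0_compat; auto. apply Rabs_pos_lt; auto. }
    exists N. intros n Hn. specialize (HN n Hn). unfold R_dist in HN.
    rewrite Rminus_0_r, <- Hns, Rabs_mult, (Rabs_right (ns (f n))) in HN by (apply Rle_ge, ns_ge0).
    rewrite subr0. apply Rmult_lt_reg_l with (Rabs (Cim lam)). apply Rabs_pos_lt; auto. exact HN. }
  apply hconv_cv in Hh.
  apply (Hcl (hs_zero, hs_zero)).
  - intros eps He. pose proof (cv_scal lam _ _ Cf) as Cf'. rewrite scal0r in Cf'.
    apply hconv_cv in Cf. apply hconv_cv in Cf'. apply hconv_cv in Hh.
    destruct (Cf eps He) as [N1 H1]. destruct (Cf' eps He) as [N2 H2]. destruct (Hh eps He) as [N3 H3].
    exists (f (max N1 (max N2 N3)), hs_scal lam (f (max N1 (max N2 N3)))), (h (max N1 (max N2 N3))).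
    split; [exists (k (max N1 (max N2 N3))); apply Hf|]. simpl.
    split; [apply H1; lia|]. split; [apply H2; lia|]. apply H3; lia.
  - intros eps He. exists (hs_zero, hs_zero), hs_zero. split.
    + exists hs_zero. apply (G_zero A G HG).
    + simpl. unfold hdist, hnorm. rewrite !subrr. fold (@ns H hs_zero). fold (@ns K hs_zero).
      rewrite !ns0, sqrt_0. repeat split; lra.
Qed.

Lemma part2 {H K : HilbertSpace} (A : lrel H) (G : brel H K) lam :
  unitary_boundary_triple A G -> Cim lam <> 0 -> weyl_condition G lam -> closable_Gamma0 G.
Proof.
  intros HG Hlam HW x y1 y2 C1 C2.
  assert (Seq : forall y, closure_HHK (Gamma0_graph G) x y -> exists s : nat -> (H * H * (K * K)),
     (forall n, G (fst (s n)) (snd (s n))) /\ cv (fun n => fst (fst (s n))) (fst x) /\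
     cv (fun n => snd (fst (s n))) (snd x) /\ cv (fun n => fst (snd (s n))) y).
  { intros y Cy. destruct (choice_nat (fun n s => G (fst s) (snd s) /\
        hdist (fst (fst s)) (fst x) < / (INR n + 1) /\ hdist (snd (fst s)) (snd x) < / (INR n + 1) /\
        hdist (fst (snd s)) y < / (INR n + 1))) as [s Hs].
    { intro n. destruct (Cy (/ (INR n + 1))) as [x' [h' [[h'' Hg] [D1 [D2 D3]]]]].
      { apply Rinv_0_lt_compat. pose proof (pos_INR n). lra. }
      exists (x', (h', h'')). simpl. auto. }
    exists s. split; [intro n; apply Hs|].
    split; [|split]; apply hconv_cv; intros eps He; destruct (small_inv eps He) as [N HN];
      exists N; intros n Hn; specialize (HN n Hn); destruct (Hs n) as (_ & D1 & D2 & D3); lra. }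
  destruct (Seq _ C1) as [s1 (G1 & A1 & B1 & D1)]. destruct (Seq _ C2) as [s2 (G2 & A2 & B2 & D2)].
  apply sub_eq0.
  destruct x as [x1 x2].
  apply (core A G lam HG Hlam HW
     (fun n => hsub (fst (fst (s1 n))) (fst (fst (s2 n)))) (fun n => hsub (snd (fst (s1 n))) (snd (fst (s2 n))))
     (fun n => hsub (fst (snd (s1 n))) (fst (snd (s2 n)))) (fun n => hsub (snd (snd (s1 n))) (snd (snd (s2 n))))).
  - intro n. apply (G_sub A G HG).
    + specialize (G1 n). destruct (s1 n) as [[a b] [c d]]. exact G1.
    + specialize (G2 n). destruct (s2 n) as [[a b] [c d]]. exact G2.
  - pose proof (cv_sub _ _ _ _ A1 A2) as C. simpl in C. rewrite subrr in C. exact C.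
  - pose proof (cv_sub _ _ _ _ B1 B2) as C. simpl in C. rewrite subrr in C. exact C.
  - exact (cv_sub _ _ _ _ D1 D2).
Qed.

Theorem mainTheorem9 (H K : HilbertSpace) (A : lrel H) (G : brel H K) :
  closed_symmetric_relation A ->
  unitary_boundary_triple A G ->
  (closable_Gamma0 G <-> (exists lam : Cx, Cim lam <> 0 /\ weyl_condition G lam)) /\
  (closable_Gamma0 G <-> (forall lam : Cx, Cim lam <> 0 -> weyl_condition G lam)).
Proof.
  intros _ HG. assert (Hi : Cim (mkCx 0 1) <> 0) by (simpl; lra). split; split.
  - intro Hc. exists (mkCx 0 1). split; auto. apply (part1 A G HG Hc); auto.
  - intros [lam [Hl Hw]]. exact (part2 A G lam HG Hl Hw).
  - intro Hc. apply (part1 A G HG Hc).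
  - intro Hw. exact (part2 A G (mkCx 0 1) HG Hi (Hw _ Hi)).
Qed.
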